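(* Let $\mathbb{F}$ be a field and $\mathcal{H}=(Q_0,Q_1,\beta)$ a directed tensor-labeled hypergraph. Then $$\dim_{\mathbb{F}}\mathcal{Z}(\mathcal{H})=|Q_1|-|V_{\mathrm{macro}}|+c_{\mathrm{macro}}+\delta(\mathcal{H}).$$
   Context: $Q_0,Q_1$ are finite sets (vertices, hyperedges). $T(\mathbb{F}^{Q_0})=\bigoplus_{k\ge0}(\mathbb{F}^{Q_0})^{\otimes k}$ is the tensor algebra. A directed tensor-labeled hypergraph is $\mathcal{H}=(Q_0,Q_1,\beta)$ with $\beta:\mathbb{F}^{Q_1}\to T(\mathbb{F}^{Q_0})\times T(\mathbb{F}^{Q_0})$ linear; write $\beta(\mathbf{1}_e)=(A_e,B_e)$ (source and target tensors). The tensor incidence map $\partial_\beta:\mathbb{F}^{Q_1}\to T(\mathbb{F}^{Q_0})$ is linear with $\partial_\beta(\mathbf{1}_e)=B_e-A_e$, and $\mathcal{Z}(\mathcal{H}):=\mathrm{Ker}(\partial_\beta)$. $V_{\mathrm{macro}}:=\{A_e\}_{e\in Q_1}\cup\{B_e\}_{e\in Q_1}\subset T(\mathbb{F}^{Q_0})$ (as a set). The macrograph $\mathcal{H}_{\mathrm{macro}}$ is the directed multigraph with vertex set $V_{\mathrm{macro}}$, edge set $Q_1$, source $e\mapsto A_e$, target $e\mapsto B_e$; $c_{\mathrm{macro}}$ is its number of weakly connected components and $B_{\mathrm{macro}}:\mathbb{F}^{Q_1}\to\mathbb{F}^{V_{\mathrm{macro}}}$ its incidence map $\mathbf{1}_e\mapsto\mathbf{1}_{B_e}-\mathbf{1}_{A_e}$.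 The evaluation map $\hat\phi:\mathbb{F}^{V_{\mathrm{macro}}}\to T(\mathbb{F}^{Q_0})$ is linear with $\mathbf{1}_w\mapsto w$. The defect invariant is $\delta(\mathcal{H}):=\dim_{\mathbb{F}}(\mathrm{Im}(B_{\mathrm{macro}})\cap\mathrm{Ker}(\hat\phi))$. *)

(* Defs.v *)
(* The tensor algebra T(F^{Q0}) is modelled as the monoid
   algebra of the free monoid on Q0 (multinomials' {malg F[{fmonom Q0}]}),
   whose basis is the set of words over Q0, i.e. the pure tensors
   e_{i1} (x) ... (x) e_{ik}.  Only its F-vector-space structure is used. *)
From HB Require Import structures.
From mathcomp Require Import all_boot all_algebra.
From mathcomp.multinomials Require Import monalg.

Set Implicit Arguments.
Unset Strict Implicit.
Unset Printing Implicit Defensive.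

Import GRing.Theory.
Local Open Scope ring_scope.

Definition tensor_alg (F : fieldType) (Q0 : finType) := {malg F[{fmonom Q0}]}.

Definition fvec (F : fieldType) (I : finType) := {ffun I -> F^o}.

Definition ind (F : fieldType) (I : finType) (e : I) : fvec F I :=
  [ffun e' => (e' == e)%:R].

Definition has_dim (F : fieldType) (vT : vectType F) (P : vT -> Prop) (n : nat) :=
  exists X : n.-tuple vT, free X /\ (forall v, P v <-> v \in <<X>>%VS).

Section Hypergraph.
Variables (F : fieldType) (Q0 Q1 : finType).
Variable beta : {linear fvec F Q1 -> (tensor_alg F Q0 * tensor_alg F Q0)%type}.

Definition srcT (e : Q1) : tensor_alg F Q0 := (beta (ind F e)).1.
Definition tgtT (e : Q1) : tensor_alg F Q0 := (beta (ind F e)).2.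

Definition incidence (x : fvec F Q1) : tensor_alg F Q0 :=
  \sum_(e : Q1) (x e : F) *: (tgtT e - srcT e).

Definition cycle_space (x : fvec F Q1) : Prop := incidence x = 0.

Definition vmacro_seq : seq (tensor_alg F Q0) :=
  [seq srcT e | e <- enum Q1] ++ [seq tgtT e | e <- enum Q1].
Definition Vmacro : finType := seq_sub vmacro_seq.

(* underlying (symmetrized) adjacency of the macrograph: weak connectivity *)
Definition macro_adj : rel Vmacro := fun v w =>
  [exists e : Q1, ((ssval v == srcT e) && (ssval w == tgtT e))
               || ((ssval v == tgtT e) && (ssval w == srcT e))].

Definition c_macro : nat := n_comp macro_adj Vmacro.

Definition B_macro (x : fvec F Q1) : fvec F Vmacro :=
  [ffun w => \sum_(e : Q1) (x e : F) *
              ((ssval w == tgtT e)%:R - (ssval w == srcT e)%:R)].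

Definition eval_macro (y : fvec F Vmacro) : tensor_alg F Q0 :=
  \sum_(w : Vmacro) (y w : F) *: ssval w.

Definition defect_space (y : fvec F Vmacro) : Prop :=
  (exists x, B_macro x = y) /\ eval_macro y = 0.

End Hypergraph.

(* Main.v *)
Require Import Defs.
From HB Require Import structures.
From mathcomp Require Import all_boot all_algebra.
From mathcomp.multinomials Require Import monalg.
From mathcomp Require Import finmap.
From mathcomp Require Import ring.
Set Implicit Arguments. Unset Strict Implicit. Unset Printing Implicit Defensive.
Import GRing.Theory.
Local Open Scope ring_scope.

Lemma dimf (F : fieldType) (I : finType) : \dim (fullv : {vspace fvec F I}) = #|I|.
Proof. rewrite dimvf; exact: muln1. Qed.

Lemma conn_gen (K : fieldType) (vT : vectType K) (T : finType) (e : rel T)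
  (W : {vspace vT}) (f : T -> vT) :
  (forall v w, e v w -> f w - f v \in W) ->
  forall a b, connect e a b -> f b - f a \in W.
Proof.
move=> he a b; case/connectP => p; elim: p a => [|c p IH] a /=.
  by move=> _ ->; rewrite subrr mem0v.
case/andP => hac hp hb.
have -> : f b - f a = (f b - f c) + (f c - f a) by rewrite addrA subrK.
by apply: memvD; [exact: IH hp hb | exact: he].
Qed.

Lemma n_comp_sig (T : finType) (e : rel T) :
  #|{: {x : T | fingraph.root e x == x}}| = n_comp e T.
Proof.
rewrite card_sig /n_comp_mem; apply: eq_card => x.
by rewrite !inE andbT.
Qed.

Section S.
Variables (F : fieldType) (Q0 Q1 : finType).
Variable beta : {linear fvec F Q1 -> (tensor_alg F Q0 * tensor_alg F Q0)%type}.
Local Notation V := (Vmacro beta).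
Local Notation adj := (@macro_adj F Q0 Q1 beta).

Definition Bm (x : fvec F Q1) : fvec F V := B_macro beta x.
Fact Bm_lin : linear Bm.
Proof.
move=> a x y; apply/ffunP=> w; rewrite /Bm /B_macro !ffunE.
by rewrite scaler_sumr -big_split; apply: eq_bigr => e _; rewrite !ffunE mulrDl scalerAl.
Qed.
HB.instance Definition _ := GRing.isLinear.Build F (fvec F Q1) (fvec F V) _ Bm Bm_lin.
Definition Bl : 'Hom(fvec F Q1, fvec F V) := linfun Bm.

Definition Em (y : fvec F V) : tensor_alg F Q0 := eval_macro y.
Fact Em_lin : linear Em.
Proof.
move=> a x y; rewrite /Em /eval_macro scaler_sumr -big_split; apply: eq_bigr => w _.
by rewrite !ffunE scalerDl scalerA.
Qed.
HB.instance Definition _ := GRing.isLinear.Build F (fvec F V) (tensor_alg F Q0) _ Em Em_lin.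

Lemma wt_mem e : tgtT beta e \in vmacro_seq beta.
Proof. by rewrite mem_cat; apply/orP; right; apply: map_f; rewrite mem_enum. Qed.
Lemma ws_mem e : srcT beta e \in vmacro_seq beta.
Proof. by rewrite mem_cat; apply/orP; left; apply: map_f; rewrite mem_enum. Qed.
Definition wt e : V := SeqSub (wt_mem e).
Definition ws e : V := SeqSub (ws_mem e).

Lemma ssval_eqP (w v : V) : (ssval w == ssval v) = (w == v).
Proof. by apply/eqP/eqP => [h|->] //; apply: val_inj. Qed.

Lemma BmE x : Bm x = \sum_e x e *: (ind F (wt e) - ind F (ws e)).
Proof.
apply/ffunP=> u; rewrite /Bm /B_macro ffunE sum_ffunE; apply: eq_bigr => e _.
by rewrite !ffunE -(ssval_eqP u (wt e)) -(ssval_eqP u (ws e)).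
Qed.

Lemma Em_ind w : Em (ind F w) = ssval w.
Proof.
rewrite /Em /eval_macro (bigD1 w) //= big1 ?addr0 => [|v vw].
  by rewrite ffunE eqxx scale1r.
by rewrite ffunE (negbTE vw) scale0r.
Qed.

Lemma incidenceE x : incidence beta x = Em (Bm x).
Proof.
rewrite BmE linear_sum; apply: eq_bigr => e _.
have h : Em (ind F (wt e) - ind F (ws e)) = tgtT beta e - srcT beta e.
  by rewrite (raddfB Em); congr (_ - _); apply: Em_ind.
rewrite -h; symmetry; exact: linearZ.
Qed.


Local Notation K := {fmonom Q0}.
Definition Mseq : seq K := flatten [seq enum_fset (msupp (ssval w)) | w <- enum V].
Local Notation MT := (seq_sub Mseq).
Definition Cm (y : fvec F V) : fvec F MT := [ffun m : MT => (Em y)@_(ssval m)].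
Fact Cm_lin : linear Cm.
Proof.
move=> a x y; apply/ffunP=> m.
have e1 z : Cm z m = (Em z)@_(ssval m) by rewrite /Cm; exact: ffunE.
have e2 (f : fvec F MT) : (a *: f) m = a * f m by exact: ffunE.
have hE : Em (a *: x + y) = a *: Em x + Em y by exact: linearP.
rewrite e1 hE mcoeffD mcoeffZ -(e1 x) -(e1 y).
by rewrite [in RHS]ffunE e2.
Qed.
HB.instance Definition _ := GRing.isLinear.Build F (fvec F V) (fvec F MT) _ Cm Cm_lin.
Definition Cl : 'Hom(fvec F V, fvec F MT) := linfun Cm.

Lemma Em0 y : (Em y == 0) = (y \in lker Cl).
Proof.
have e1 m : Cm y m = (Em y)@_(ssval m) by rewrite /Cm; exact: ffunE.
rewrite memv_ker lfunE /=; apply/eqP/eqP => [h|h].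
  by apply/ffunP => m; rewrite e1 h mcoeff0 [RHS]ffunE.
apply/malgP => k; rewrite mcoeff0.
case: (boolP (k \in Mseq)) => hk.
  by move/ffunP: h => /(_ (SeqSub hk)); rewrite e1 [in RHS]ffunE.
rewrite /Em /eval_macro raddf_sum big1 // => w _.
apply: (etrans (mcoeffZ _ _ _)); rewrite mcoeff_outdom ?mulr0 //.
apply: contra hk => hw; apply/flattenP; exists (enum_fset (msupp (ssval w))) => //.
by apply: map_f; rewrite mem_enum.
Qed.


Lemma adj_sym : symmetric adj.
Proof.
move=> v w; apply/existsP/existsP => -[e h]; exists e;
  by case/orP: h => /andP[-> ->]; rewrite ?orbT.
Qed.
Let csym : connect_sym adj := sym_connect_sym adj_sym.

Definition Rt := {r : V | fingraph.root adj r == r}.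
Definition Pm (y : fvec F V) : fvec F Rt :=
  [ffun r : Rt => \sum_(w | fingraph.root adj w == val r) y w].
Fact Pm_lin : linear Pm.
Proof.
move=> a x y; apply/ffunP=> r; rewrite !ffunE scaler_sumr -big_split /=.
by apply: eq_bigr => w _; rewrite !ffunE.
Qed.
HB.instance Definition _ := GRing.isLinear.Build F (fvec F V) (fvec F Rt) _ Pm Pm_lin.
Definition Pl : 'Hom(fvec F V, fvec F Rt) := linfun Pm.

Lemma Pm_ind w : Pm (ind F w) = [ffun r : Rt => (fingraph.root adj w == val r)%:R].
Proof.
apply/ffunP => r; rewrite !ffunE.
case: (boolP (fingraph.root adj w == val r)) => h.
  rewrite (bigD1 w) //= big1 ?addr0 => [|v /andP [_ vw]]; first by rewrite ffunE eqxx.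
  by rewrite ffunE (negbTE vw).
rewrite big1 // => v hv; rewrite ffunE; case: eqP => // ev.
by rewrite -ev hv in h.
Qed.

Lemma Bm_ind e : Bm (ind F e) = ind F (wt e) - ind F (ws e).
Proof.
rewrite BmE (bigD1 e) //= big1 ?addr0 => [|e' he']; first by rewrite ffunE eqxx scale1r.
by rewrite ffunE (negbTE he') scale0r.
Qed.

Lemma adj_wt e : adj (ws e) (wt e).
Proof. by apply/existsP; exists e; rewrite !eqxx. Qed.

Lemma limg_in x : Bl x \in limg Bl.
Proof. exact: memv_img (memvf x). Qed.

Lemma edge_in v w : adj v w -> ind F w - ind F v \in limg Bl.
Proof.
case/existsP => e /orP [/andP [/eqP hv /eqP hw] | /andP [/eqP hv /eqP hw]].
  have -> : w = wt e by apply: val_inj.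
  have -> : v = ws e by apply: val_inj.
  by rewrite -Bm_ind -[Bm _]lfunE limg_in.
have -> : w = ws e by apply: val_inj.
have -> : v = wt e by apply: val_inj.
by rewrite -opprB -Bm_ind -[Bm _]lfunE memvN limg_in.
Qed.

Lemma conn_in a b : connect adj a b -> ind F b - ind F a \in limg Bl.
Proof. exact: conn_gen edge_in a b. Qed.

Lemma Pm_ind_eq v w : fingraph.root adj v = fingraph.root adj w -> Pm (ind F v) = Pm (ind F w).
Proof. by move=> h; rewrite !Pm_ind h. Qed.

Lemma PBm x : Pm (Bm x) = 0.
Proof.
rewrite BmE linear_sum big1 // => e _.
have h : Pm (ind F (wt e) - ind F (ws e)) = 0.
  transitivity (Pm (ind F (wt e)) - Pm (ind F (ws e))); first exact: raddfB.
  apply/eqP; rewrite subr_eq0; apply/eqP; apply: Pm_ind_eq.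
  by apply/esym/(fingraph.rootP csym)/connect1/adj_wt.
transitivity (x e *: Pm (ind F (wt e) - ind F (ws e))); first exact: linearZ.
by rewrite h scaler0.
Qed.

Lemma decomp y : Pm y = 0 -> y = \sum_w y w *: (ind F w - ind F (fingraph.root adj w)).
Proof.
move=> hP; apply/ffunP => u; rewrite sum_ffunE.
rewrite (eq_bigr (fun w => y w * (u == w)%:R - y w * (u == fingraph.root adj w)%:R)); last first.
  by move=> w _; rewrite !ffunE; exact: mulrBr.
rewrite sumrB (bigD1 u) //= big1 => [|w wu]; last by rewrite eq_sym (negbTE wu) mulr0.
rewrite eqxx mulr1 addr0.
suff -> : \sum_w y w * (u == fingraph.root adj w)%:R = 0 by rewrite subr0.
transitivity (\sum_(w | fingraph.root adj w == u) y w).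
  rewrite [RHS]big_mkcond; apply: eq_bigr => w _.
  by rewrite [fingraph.root adj w == u]eq_sym; case: eqP; rewrite ?mulr1 ?mulr0.
case: (boolP (fingraph.root adj u == u)) => hu.
  by move/ffunP: hP => /(_ (exist _ u hu)); rewrite !ffunE.
apply: big1 => w /eqP hw; move: hu; by rewrite -hw fingraph.root_root ?eqxx.
Qed.

Lemma limgE : limg Bl = lker Pl.
Proof.
apply/vspaceP => y; apply/idP/idP.
  by case/memv_imgP => x _ ->; rewrite memv_ker !lfunE /= PBm.
rewrite memv_ker lfunE /= => /eqP /decomp ->.
apply: rpred_sum => w _; apply: memvZ; rewrite -opprB memvN.
exact/conn_in/fingraph.connect_root.
Qed.

Lemma limgP_full : limg Pl = fullv.
Proof.
apply/vspaceP => z; rewrite memvf; apply/memv_imgP.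
exists (\sum_(r : Rt) z r *: ind F (val r)); first exact: memvf.
rewrite lfunE /= linear_sum /=; apply/ffunP => r'; rewrite sum_ffunE.
rewrite (bigD1 r') //= big1 => [|r hr].
  by rewrite linearZ /= Pm_ind !ffunE (eqP (valP r')) eqxx addr0; exact/esym/mulr1.
rewrite linearZ /= Pm_ind !ffunE (eqP (valP r)).
by rewrite (inj_eq val_inj) (negbTE hr); exact: mulr0.
Qed.

Lemma card_Rt : #|{: Rt}| = c_macro beta.
Proof. exact: n_comp_sig. Qed.

End S.

Lemma has_dimP (F : fieldType) (vT : vectType F) (P : vT -> Prop) (W : {vspace vT}) :
  (forall v, P v <-> v \in W) -> has_dim P (\dim W).
Proof.
move=> h; exists (vbasis W); split; first exact: basis_free (vbasisP W).
by move=> v; rewrite (span_basis (vbasisP W)).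
Qed.

Theorem theorem3p14 (F : fieldType) (Q0 Q1 : finType)
  (beta : {linear fvec F Q1 -> (tensor_alg F Q0 * tensor_alg F Q0)%type}) :
  exists dimZ delta : nat,
    [/\ has_dim (@cycle_space F Q0 Q1 beta) dimZ,
        has_dim (@defect_space F Q0 Q1 beta) delta &
        (dimZ%:Z = #|Q1|%:Z - #|Vmacro beta|%:Z + (c_macro beta)%:Z + delta%:Z)%R].
Proof.
pose U := lker (Cl beta \o Bl beta)%VF.
have hU : forall x, x \in U = (Em (Bm beta x) == 0).
  by move=> x; rewrite Em0 memv_ker comp_lfunE [Bl _ _]lfunE /= memv_ker.
pose D := (Bl beta @: U)%VS.
exists (\dim U), (\dim D); split.
- apply: has_dimP => x; rewrite hU /cycle_space incidenceE.
  by split => [->|/eqP].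
- apply: has_dimP => y; split.
    case=> -[x hx] hy; apply/memv_imgP; exists x; last by rewrite lfunE.
    by rewrite hU; apply/eqP; rewrite /Bm hx; exact: hy.
  case/memv_imgP => x hx ->; rewrite hU in hx; rewrite lfunE /=.
  by split; [exists x | apply/eqP].
have h1 := limg_ker_dim (Bl beta) U.
have hcap : (U :&: lker (Bl beta) = lker (Bl beta))%VS.
  apply/capv_idPr/subvP => x; rewrite hU memv_ker lfunE /= => /eqP ->.
  by rewrite linear0.
rewrite hcap -/D in h1.
have h2 := limg_ker_dim (Bl beta) fullv.
rewrite capfv dimf in h2.
have h3 := limg_ker_dim (Pl beta) fullv.
rewrite capfv dimf limgP_full dimf card_Rt -limgE in h3.
rewrite -h1 -h3 -h2.

rewrite !PoszD; ring.
Qed.
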